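(* Let $q\neq-1$ be real and let $n,m\ge0$ be integers. Then $$\sum_{j=0}^{n}(-1)^jq^{\binom{j}{2}}\begin{bmatrix} n\\ j\end{bmatrix}\prod_{i=n+m+1-j}^{n+m}(1+q^i)\;T_{2n+m-j}(1,s,q)=q^{n^2+mn}s^n\,T_m(1,s,q).$$
   Context: $T_0=1$, $T_1=x$, $T_n(x,s,q)=(1+q^{n-1})x\,T_{n-1}(x,s,q)+q^{n-1}s\,T_{n-2}(x,s,q)$ for $n\ge2$; $T_n(1,s,q)$ is its value at $x=1$. Notation: $[m]=1+q+\cdots+q^{m-1}$, $[m]!=[1]\cdots[m]$, $\begin{bmatrix} m\\ j\end{bmatrix}=\frac{[m]!}{[j]![m-j]!}$; empty products equal $1$. *)

(* Defs.v *)
From mathcomp Require Import all_boot all_order all_algebra.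
Set Implicit Arguments. Unset Strict Implicit. Unset Printing Implicit Defensive.
Import Order.TTheory GRing.Theory Num.Theory.
Local Open Scope ring_scope.

(* T_0 = 1, T_1 = x,
   T_n = (1 + q^(n-1)) x T_(n-1) + q^(n-1) s T_(n-2)  for n >= 2.
   Tpair n = (T_n, T_(n+1)). *)
Fixpoint Tpair (R : ringType) (x s q : R) (n : nat) : R * R :=
  match n with
  | 0%N => (1, x)
  | k.+1 => let p := Tpair x s q k in
            (p.2, (1 + q ^+ k.+1) * x * p.2 + q ^+ k.+1 * s * p.1)
  end.

Definition T (R : ringType) (n : nat) (x s q : R) : R := (Tpair x s q n).1.

Definition qint (R : ringType) (q : R) (m : nat) : R := \sum_(i < m) q ^+ i.
Definition qfact (R : ringType) (q : R) (m : nat) : R :=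
  \prod_(1 <= i < m.+1) qint q i.
Definition qbinom (R : fieldType) (q : R) (m j : nat) : R :=
  qfact q m / (qfact q j * qfact q (m - j)).

(* Main.v *)
Require Import Defs.
From mathcomp Require Import all_boot all_order all_algebra.
From mathcomp Require Import ring lra zify.
Import Order.TTheory GRing.Theory Num.Theory.
Set Implicit Arguments. Unset Strict Implicit.
Local Open Scope ring_scope.

Lemma qintS (R : ringType) (q : R) k : qint q k.+1 = qint q k + q ^+ k.
Proof. by rewrite /qint big_ord_recr. Qed.

Lemma qint0 (R : ringType) (q : R) : qint q 0 = 0.
Proof. by rewrite /qint big_ord0. Qed.

Lemma qint_add (R : comRingType) (q : R) a b :
  qint q (a + b) = qint q a + q ^+ a * qint q b.
Proof.
elim: b => [|b IH]; first by rewrite addn0 qint0 mulr0 addr0.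
by rewrite addnS !qintS IH exprD; ring.
Qed.

Lemma qint_mul (R : comRingType) (q : R) k : qint q k * (1 - q) = 1 - q ^+ k.
Proof.
elim: k => [|k IH]; first by rewrite qint0 mul0r expr0 subrr.
by rewrite qintS mulrDl IH exprS; ring.
Qed.

Lemma qint_neq0 (R : realFieldType) (q : R) k :
  q != -1 -> (0 < k)%N -> qint q k != 0.
Proof.
move=> hq k0.
have [->|q1] := eqVneq q 1.
  rewrite /qint (eq_bigr (fun _ => 1)); last by move=> i _; rewrite expr1n.
  by rewrite sumr_const card_ord pnatr_eq0 -lt0n.
apply/eqP => h.
have := qint_mul q k; rewrite h mul0r => /eqP; rewrite eq_sym subr_eq0 => /eqP hk.
have : `|q| ^+ k = 1 by rewrite -normrX -hk normr1.
move/eqP; rewrite pexpr_eq1 ?normr_ge0 // => /eqP.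
case: (lerP 0 q) => hq0.
  by rewrite ger0_norm // => e; move: q1; rewrite e eqxx.
rewrite ltr0_norm // => /eqP; rewrite eqr_oppLR => /eqP e; move: hq; rewrite e eqxx.
by [].
Qed.

Lemma qfactS (R : ringType) (q : R) k : qfact q k.+1 = qfact q k * qint q k.+1.
Proof. by rewrite /qfact big_nat_recr. Qed.

Lemma qfact0 (R : ringType) (q : R) : qfact q 0 = 1.
Proof. by rewrite /qfact big_geq. Qed.

Lemma qfact_neq0 (R : realFieldType) (q : R) k : q != -1 -> qfact q k != 0.
Proof.
move=> hq; elim: k => [|k IH]; first by rewrite qfact0 oner_neq0.
by rewrite qfactS mulf_neq0 // qint_neq0.
Qed.

Definition B (R : fieldType) (q : R) n j := if (j <= n)%N then qbinom q n j else 0.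

Lemma qbinom_nn (R : realFieldType) (q : R) k : q != -1 -> qbinom q k k = 1.
Proof. by move=> hq; rewrite /qbinom subnn qfact0 mulr1 divff // qfact_neq0. Qed.

Lemma B_n0 (R : realFieldType) (q : R) n : q != -1 -> B q n 0 = 1.
Proof. by move=> hq; rewrite /B /qbinom subn0 qfact0 mul1r divff // qfact_neq0. Qed.

Lemma B_over (R : fieldType) (q : R) n j : (n < j)%N -> B q n j = 0.
Proof. by move=> h; rewrite /B leqNgt h. Qed.

Lemma Bpascal (R : realFieldType) (q : R) n j : q != -1 -> (j <= n)%N ->
  B q n.+1 j.+1 = B q n j.+1 + q ^+ (n - j) * B q n j.
Proof.
move=> hq hj; have [ltjn|hnj] := ltnP j n; last first.
  have -> : j = n by apply/eqP; rewrite eqn_leq hj hnj.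
  by rewrite /B !leqnn ltnn subnn expr0 mul1r add0r !qbinom_nn.
have [k ->] : exists k, n = (j + k).+1 by exists (n - j.+1)%N; lia.
have h1 : (j.+1 <= (j + k).+2)%N by lia.
have h2 : (j.+1 <= (j + k).+1)%N by lia.
have h3 : (j <= (j + k).+1)%N by lia.
rewrite /B h1 h2 h3 /qbinom.
have -> : ((j + k).+2 - j.+1 = k.+1)%N by lia.
have -> : ((j + k).+1 - j.+1 = k)%N by lia.
have -> : ((j + k).+1 - j = k.+1)%N by lia.
have hI : qint q (j + k).+2 = qint q k.+1 + q ^+ k.+1 * qint q j.+1.
  by rewrite -qint_add; congr qint; lia.
rewrite !qfactS hI.
have n1 := qfact_neq0 (j + k) hq.
have n2 := qfact_neq0 j hq.
have n3 := qfact_neq0 k hq.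
have n4 : qint q (j + k).+1 != 0 by rewrite qint_neq0.
have n5 : qint q j.+1 != 0 by rewrite qint_neq0.
have n6 : qint q k.+1 != 0 by rewrite qint_neq0.
by field; rewrite ?n1 ?n2 ?n3 ?n4 ?n5 ?n6.
Qed.

Lemma Brel (R : realFieldType) (q : R) n j : q != -1 -> (j <= n)%N ->
  B q n j.+1 * qint q j.+1 = B q n j * qint q (n - j).
Proof.
move=> hq hj; have [ltjn|hnj] := ltnP j n; last first.
  have -> : j = n by apply/eqP; rewrite eqn_leq hj hnj.
  by rewrite B_over // subnn qint0 !mulr0 mul0r.
have [k ->] : exists k, n = (j + k).+1 by exists (n - j.+1)%N; lia.
have h2 : (j.+1 <= (j + k).+1)%N by lia.
have h3 : (j <= (j + k).+1)%N by lia.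
rewrite /B h2 h3 /qbinom.
have -> : ((j + k).+1 - j.+1 = k)%N by lia.
have -> : ((j + k).+1 - j = k.+1)%N by lia.
rewrite !qfactS.
have n1 := qfact_neq0 (j + k) hq.
have n2 := qfact_neq0 j hq.
have n3 := qfact_neq0 k hq.
have n4 : qint q (j + k).+1 != 0 by rewrite qint_neq0.
have n5 : qint q j.+1 != 0 by rewrite qint_neq0.
have n6 : qint q k.+1 != 0 by rewrite qint_neq0.
by field; rewrite ?n1 ?n2 ?n3 ?n4 ?n5 ?n6.
Qed.

Definition P (R : ringType) (q : R) M j := \prod_(M.+1 - j <= i < M.+1) (1 + q ^+ i).
Definition cc (R : realFieldType) (q : R) n M j :=
  (-1) ^+ j * q ^+ 'C(j, 2) * B q n j * P q M j.
Definition L (R : realFieldType) (q s : R) n m :=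
  \sum_(j < n.+1) cc q n (n + m) j * T (2 * n + m - j) 1 s q.

Lemma P0 (R : ringType) (q : R) M : P q M 0 = 1.
Proof. by rewrite /P subn0 big_geq. Qed.

Lemma P_S1 (R : ringType) (q : R) M j : (j <= M)%N ->
  P q M j.+1 = (1 + q ^+ (M - j)) * P q M j.
Proof.
move=> h; rewrite /P subSS big_ltn; last by lia.
by rewrite subSn.
Qed.

Lemma P_S2 (R : ringType) (q : R) M j : (j <= M.+1)%N ->
  P q M.+1 j.+1 = P q M j * (1 + q ^+ M.+1).
Proof.
move=> h; rewrite /P subSS big_nat_recr //=; lia.
Qed.

Lemma Trec (R : ringType) (q s : R) k :
  T k.+2 1 s q = (1 + q ^+ k.+1) * T k.+1 1 s q + q ^+ k.+1 * s * T k 1 s q.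
Proof. by rewrite /T /= mulr1. Qed.

Lemma term (R : realFieldType) (q : R) n m j : q != -1 -> (j <= n)%N ->
  cc q n.+1 (n + m).+1 j.+1 =
  cc q n (n + m).+2 j.+1 - q ^+ n * (1 + q ^+ m.+1) * cc q n (n + m).+1 j.
Proof.
move=> hq hj.
rewrite /cc P_S1; last by lia.
rewrite P_S2; last by lia.
rewrite Bpascal //.
have rel : B q n j.+1 * (1 - q ^+ j.+1) = B q n j * (1 - q ^+ (n - j)).
  by rewrite -!qint_mul !mulrA Brel.
rewrite binS bin1 exprD.
have -> : ((n + m).+1 - j = (n - j) + m.+1)%N by lia.
have -> : ((n + m).+2 = j + (n - j) + m.+1 + 1)%N by lia.
have -> : q ^+ n = q ^+ j * q ^+ (n - j) by rewrite -exprD subnKC.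
rewrite !exprD expr1 exprSr in rel *.
rewrite exprS.
apply/eqP; rewrite -subr_eq0; apply/eqP.
transitivity (- ((-1) ^+ j * q ^+ 'C(j, 2) * P q (n + m).+1 j) * q ^+ j * q ^+ (n - j)
   * q ^+ m.+1 * (B q n j.+1 * (1 - q ^+ j * q) - B q n j * (1 - q ^+ (n - j)))).
  by ring.
by rewrite rel subrr mulr0.
Qed.

Lemma stepL (R : realFieldType) (q s : R) n m : q != -1 ->
  L q s n.+1 m = L q s n m.+2 - q ^+ n * (1 + q ^+ m.+1) * L q s n m.+1.
Proof.
move=> hq.
have ext : L q s n m.+2 =
    \sum_(j < n.+2) cc q n (n + m.+2) j * T (2 * n + m.+2 - j) 1 s q.
  by rewrite /L [in RHS]big_ord_recr /= /cc B_over // mulr0 !mul0r addr0.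
rewrite ext /L big_ord_recl [X in _ = X - _]big_ord_recl mulr_sumr -addrA -sumrB.
congr (_ + _).
  rewrite /cc !B_n0 // !P0 /=.
  by congr (_ * T _ 1 s q); lia.
apply: eq_bigr => j _; rewrite !lift0.
have hj : (j <= n)%N by have := ltn_ord j; lia.
rewrite addSn !addnS term //.
have -> : (2 * n.+1 + m - j.+1 = (2 * n + m).+1 - j)%N by lia.
have -> : ((2 * n + m).+2 - j.+1 = (2 * n + m).+1 - j)%N by lia.
ring.
Qed.

Lemma mainL (R : realFieldType) (q s : R) n m : q != -1 ->
  L q s n m = q ^+ (n ^ 2 + m * n) * s ^+ n * T m 1 s q.
Proof.
move=> hq; elim: n m => [|n IH] m.
  rewrite /L big_ord1 /cc B_n0 // P0 /=.
  have -> : (2 * 0 + m - 0 = m)%N by lia.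
  have -> : (0 ^ 2 + m * 0 = 0)%N by lia.
  by rewrite !expr0 !mul1r.
rewrite stepL // !IH Trec.
have -> : (n.+1 ^ 2 + m * n.+1 = (n ^ 2 + m.+2 * n) + m.+1)%N by lia.
have -> : (n ^ 2 + m.+2 * n = n + (n ^ 2 + m.+1 * n))%N by lia.
set E := (n ^ 2 + m.+1 * n)%N.
rewrite !exprD !exprS; ring.
Qed.

Theorem theorem3p2 (R : realFieldType) (q s : R) (hq : q != -1) (n m : nat) :
  \sum_(0 <= j < n.+1)
     (-1) ^+ j * q ^+ 'C(j, 2) * qbinom q n j
     * (\prod_((n + m).+1 - j <= i < (n + m).+1) (1 + q ^+ i))
     * T (2 * n + m - j) 1 s q
  = q ^+ (n ^ 2 + m * n) * s ^+ n * T m 1 s q.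
Proof.
rewrite -mainL // /L big_mkord; apply: eq_bigr => j _.
by rewrite /cc /B /P (_ : (j <= n)%N = true) //; have := ltn_ord j; lia.
Qed.
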